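(* Let $V_\theta$ be a real vector space of finite dimension $D\ge1$ and let $M\subset V_\theta\times[0,1]$ be a dichotomous item response hypersurface with associated function $f:V_\theta\to[0,1]$. Then for every $w\in V_\theta$ there exists an affine hyperplane $H_w\subset V_\theta$ (of dimension $D-1$) with $w\in H_w$ such that the restriction of $f$ to $H_w$ is constant.
   Context: A dichotomous item response hypersurface (IRHS) is a $D=\dim V_\theta$ dimensional smooth submanifold $M$ of $V_\theta\times[0,1]$ such that for any two vectors $v,w\in V_\theta$, the intersection of $(w+\mathbb{R}\cdot v)\times[0,1]$ with $M$ is the graph of a monotonic function $w+\mathbb{R}\cdot v\to[0,1]$, where $w+\mathbb{R}\cdot v=\{w+\lambda v:\lambda\in\mathbb{R}\}$. A function $g:w+\mathbb{R}\cdot v\to[0,1]$ is monotonic if either $g(w+\lambda v)\le g(w+\mu v)$ for all $\lambda\le\mu$, or $g(w+\lambda v)\ge g(w+\mu v)$ for all $\lambda\le\mu$. Taking $v=0$ shows $M$ is the graph of a function $f:V_\theta\to[0,1]$, the associated function. *)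

(* Defs.v *)
From HB Require Import structures.
From mathcomp Require Import all_boot all_order all_algebra.
From mathcomp Require Import all_classical all_reals all_analysis.
Set Implicit Arguments. Unset Strict Implicit. Unset Printing Implicit Defensive.
Import Order.TTheory GRing.Theory Num.Theory.
Import numFieldNormedType.Exports.
Local Open Scope classical_set_scope.
Local Open Scope ring_scope.

Fixpoint Ck (R : realType) (V : normedModType R) (k : nat) (g : V -> R) : Prop :=
  match k with
  | 0 => continuous g
  | k'.+1 => (forall x v, derivable g x v) /\ forall v, Ck k' (fun x => derive g x v)
  end.

Definition smooth (R : realType) (V : normedModType R) (g : V -> R) : Prop :=
  forall k, Ck k g.

Definition smooth_hypersurface (R : realType) (W : normedModType R)
    (M : set W) : Prop :=
  forall p, M p ->
    exists (U : set W) (g : W -> R),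
      [/\ open U, U p, smooth g,
          (forall q, U q -> (M q <-> g q = 0)) &
          exists v : W, derive g p v != 0].

Definition monotonic (R : realType) (g : R -> R) : Prop :=
  (forall l m, l <= m -> g l <= g m) \/ (forall l m, l <= m -> g m <= g l).

(* Dichotomous item response hypersurface in V_theta x [0,1],
   with V_theta = 'rV[R]_D (a real vector space of dimension D). *)
Definition IRHS (R : realType) (D : nat) (M : set ('rV[R]_D * R)) : Prop :=
  [/\ M `<=` [set p | 0 <= p.2 <= 1],
      smooth_hypersurface M &
      forall v w : 'rV[R]_D, exists g : R -> R,
        monotonic g /\
        forall (l : R) (y : R), M (w + l *: v, y) <-> y = g l].

(* Main.v *)
Require Import Defs.
From HB Require Import structures.
From mathcomp Require Import all_boot all_order all_algebra.
From mathcomp Require Import all_classical all_reals all_analysis.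
Import Order.TTheory GRing.Theory Num.Theory.
Import numFieldNormedType.Exports.
Local Open Scope classical_set_scope.
Local Open Scope ring_scope.

From mathcomp Require Import ring lra.

Section Sep.
Variable R : realType.

Definition dt {n} (z a : 'rV[R]_n) : R := (z *m a^T) 0 0.

Lemma dtD n (z1 z2 a : 'rV[R]_n) : dt (z1 + z2) a = dt z1 a + dt z2 a.
Proof. by rewrite /dt mulmxDl mxE. Qed.

Lemma dtZ n t (z a : 'rV[R]_n) : dt (t *: z) a = t * dt z a.
Proof. by rewrite /dt -scalemxAl mxE. Qed.

Lemma dt_row n (s1 s2 : 'rV[R]_1) (z1 z2 : 'rV[R]_n) :
  dt (row_mx s1 z1) (row_mx s2 z2) = s1 0 0 * s2 0 0 + dt z1 z2.
Proof.
by rewrite /dt tr_row_mx mul_row_col mxE [(s1 *m _) 0 0]mxE big_ord1 mxE.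
Qed.

Lemma dt_sym n (z a : 'rV[R]_n) : dt z a = dt a z.
Proof. rewrite /dt !mxE; apply: eq_bigr => i _; rewrite !mxE mulrC //. Qed.

Lemma dt_pos n (a : 'rV[R]_n) : a != 0 -> 0 < dt a a.
Proof.
move=> a0; rewrite /dt mxE.
have [i ai] : exists i, a 0 i != 0.
  apply/existsP; apply: contraR a0; rewrite negb_exists => /forallP H.
  apply/eqP/matrixP => x j; rewrite ord1 mxE; have := H j; by rewrite negbK => /eqP.
rewrite (bigD1 i) //= ltr_pwDl //.
  by rewrite mxE -expr2 lt_def sqr_ge0 sqrf_eq0 ai.
by apply: sumr_ge0 => j _; rewrite mxE -expr2 sqr_ge0.
Qed.

Definition c0 {n} (z : 'rV[R]_(1+n)) : R := z 0 (lshift n 0).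

Lemma dt_c n (z : 'rV[R]_(1+n)) s a0 :
  dt z (row_mx s%:M a0) = c0 z * s + dt (rsubmx z) a0.
Proof. by rewrite -{1}(hsubmxK z) dt_row !mxE /= mulr1n. Qed.

Lemma dtDr n (z a b : 'rV[R]_n) : dt z (a + b) = dt z a + dt z b.
Proof. by rewrite dt_sym dtD -!(dt_sym _ z). Qed.

Lemma dtZr n t (z a : 'rV[R]_n) : dt z (t *: a) = t * dt z a.
Proof. by rewrite dt_sym dtZ -!(dt_sym _ z). Qed.

Lemma c0D n (z1 z2 : 'rV[R]_(1+n)) : c0 (z1 + z2) = c0 z1 + c0 z2.
Proof. by rewrite /c0 mxE. Qed.
Lemma c0Z n t (z : 'rV[R]_(1+n)) : c0 (t *: z) = t * c0 z.
Proof. by rewrite /c0 mxE. Qed.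

Lemma c0_row n (z : 'rV[R]_(1+n)) : c0 z = 0 -> z = row_mx 0 (rsubmx z).
Proof.
move=> h; rewrite -{1}(hsubmxK z); congr row_mx.
by apply/matrixP => i j; rewrite !ord1 !mxE.
Qed.

Lemma sep_step n (K : set 'rV[R]_(1+n)) :
  (forall z1 z2, K z1 -> K z2 -> K (z1 + z2)) ->
  (forall t z, 0 < t -> K z -> K (t *: z)) ->
  ~ K 0 ->
  ((exists a0 : 'rV[R]_n, a0 != 0 /\ forall z', K (row_mx 0 z') -> 0 <= dt z' a0)
    \/ (forall z', ~ K (row_mx 0 z'))) ->
  exists a, a != 0 /\ forall z, K z -> 0 <= dt z a.
Proof.
move=> hadd hsc h0 IH.
have comb : forall p q, K p -> K q -> 0 < c0 p -> c0 q < 0 ->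
    K (row_mx 0 (rsubmx ((- c0 q) *: p + c0 p *: q))).
  move=> p q Kp Kq hp hq; rewrite -c0_row; last first.
    by rewrite c0D !c0Z; ring.
  by apply: hadd; apply: hsc => //; rewrite oppr_gt0.
have [hneg|hneg] := pselect (exists q, K q /\ c0 q < 0); last first.
  exists (row_mx 1%:M 0); split.
    by rewrite row_mx_eq0 negb_and; apply/orP; left; apply/eqP => /matrixP /(_ 0 0); rewrite !mxE /= => /eqP; rewrite oner_eq0.
  move=> z Kz; rewrite dt_c mulr1 /dt trmx0 mulmx0 mxE addr0.
  by rewrite leNgt; apply/negP => hz; apply: hneg; exists z.
have [hpos|hpos] := pselect (exists p, K p /\ 0 < c0 p); last first.
  exists (row_mx (-1)%:M 0); split.
    by rewrite row_mx_eq0 negb_and; apply/orP; left; apply/eqP => /matrixP /(_ 0 0); rewrite !mxE /= => /eqP; rewrite oppr_eq0 oner_eq0.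
  move=> z Kz; rewrite dt_c mulrN1 /dt trmx0 mulmx0 mxE addr0 oppr_ge0.
  by rewrite leNgt; apply/negP => hz; apply: hpos; exists z.
have [[p [Kp hp]] [q [Kq hq]]] := (hpos, hneg).
case: IH => [[a0 [a0n0 IH]]|IH]; last first.
  by exfalso; apply: (IH _ (comb p q Kp Kq hp hq)).
pose P := [set x | exists z, [/\ K z, 0 < c0 z & x = - dt (rsubmx z) a0 / c0 z]].
have key : forall z1 z2, K z1 -> K z2 -> 0 < c0 z1 -> c0 z2 < 0 ->
    - dt (rsubmx z1) a0 / c0 z1 <= dt (rsubmx z2) a0 / (- c0 z2).
  move=> z1 z2 K1 K2 h1 h2.
  have := IH _ (comb _ _ K1 K2 h1 h2).
  rewrite linearD !linearZ /= dtD !dtZ => H.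
  have h2' : 0 < - c0 z2 by rewrite oppr_gt0.
  rewrite ler_pdivrMr // mulrC mulrA ler_pdivlMr //.
  nra.
set al := sup P.
have Pub : forall z, K z -> c0 z < 0 -> ubound P (dt (rsubmx z) a0 / (- c0 z)).
  by move=> z Kz hz x [z1 [K1 h1 ->]]; apply: key.
have hubP : has_ubound P by exists (dt (rsubmx q) a0 / (- c0 q)); exact: Pub.
have neP : P !=set0 by exists (- dt (rsubmx p) a0 / c0 p); exists p.
exists (row_mx al%:M a0); split.
  by rewrite row_mx_eq0 negb_and a0n0 orbT.
move=> z Kz; rewrite dt_c.
have [hz|hz|hz] := ltgtP (c0 z) 0.
- have := ge_sup neP (Pub z Kz hz); rewrite -/al.
  have h2' : 0 < - c0 z by rewrite oppr_gt0.
  rewrite ler_pdivlMr // => H; nra.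
- have H := @ub_le_sup _ P hubP (- dt (rsubmx z) a0 / c0 z) (ex_intro _ z (And3 Kz hz erefl)).
  move: H; rewrite -/al ler_pdivrMr // => H; nra.
- rewrite hz mul0r add0r; apply: IH.
  by rewrite -c0_row.
Qed.

Lemma sep n (K : set 'rV[R]_(1+n)) :
  (forall z1 z2, K z1 -> K z2 -> K (z1 + z2)) ->
  (forall t z, 0 < t -> K z -> K (t *: z)) ->
  ~ K 0 ->
  exists a, a != 0 /\ forall z, K z -> 0 <= dt z a.
Proof.
elim: n K => [|m IHm] K hadd hsc h0.
  apply: sep_step => //; right => z'.
  by rewrite thinmx0 row_mx0.
apply: sep_step => //; left.
apply: (IHm [set z' | K (row_mx 0 z')]).
- by move=> z1 z2 /= K1 K2; rewrite -[X in row_mx X _](addr0 0) -add_row_mx; exact: hadd.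
- by move=> t z /= ht Kz; rewrite -[X in row_mx X _](scaler0 _ t) -scale_row_mx; exact: hsc.
- by rewrite /= row_mx0.
Qed.

Section Assembly.
Variable n : nat.
Variable f : 'rV[R]_(1+n) -> R.
Hypothesis LM : forall x d, monotonic (fun t => f (x + t *: d)).
Hypothesis KJ : forall x0 e a b, a < b -> a <= f x0 <= b ->
  (forall t, t < 0 -> f (x0 + t *: e) <= a) ->
  (forall t, 0 < t -> b <= f (x0 + t *: e)) -> False.

Lemma LO1 x d c : f x < c -> exists e, 0 < e /\ f (x + e *: d) < c.
Proof.
move=> hx; apply: contrapT => hn.
have hge : forall e, 0 < e -> c <= f (x + e *: d).
  move=> e he; rewrite leNgt; apply/negP => h; apply: hn; by exists e.
have h1 := hge 1 ltr01.
have inc : forall l m, l <= m -> f (x + l *: d) <= f (x + m *: d).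
  case: (LM x d) => // dec; exfalso.
  have := dec 0 1 ler01; rewrite scale0r addr0 => h; lra.
apply: (KJ x d (f x) c) => //.
- by rewrite lexx ltW.
- by move=> t ht; have := inc t 0 (ltW ht); rewrite scale0r addr0.
Qed.

Lemma LO2 x d c : c < f x -> exists e, 0 < e /\ c < f (x + e *: d).
Proof.
move=> hx; apply: contrapT => hn.
have hge : forall e, 0 < e -> f (x + e *: d) <= c.
  move=> e he; rewrite leNgt; apply/negP => h; apply: hn; by exists e.
have h1 := hge 1 ltr01.
have dec : forall l m, l <= m -> f (x + m *: d) <= f (x + l *: d).
  case: (LM x d) => // inc; exfalso.
  have := inc 0 1 ler01; rewrite scale0r addr0 => h; lra.
apply: (KJ x (-d) c (f x)) => //.
- by rewrite lexx ltW.
- by move=> t ht; rewrite scalerN -scaleNr; apply: hge; rewrite oppr_gt0.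
- move=> t ht; rewrite scalerN -scaleNr.
  by have := dec (-t) 0; rewrite scale0r addr0; apply; rewrite oppr_le0 ltW.
Qed.

Lemma seg_lt y1 y2 c (t : R) : f y1 < c -> f y2 < c -> 0 <= t <= 1 ->
  f (y1 + t *: (y2 - y1)) < c.
Proof.
move=> h1 h2 /andP[t0 t1].
case: (LM y1 (y2 - y1)) => H.
- have := H t 1 t1; rewrite scale1r (addrC y1 (y2 - y1)) subrK => h; lra.
- have := H 0 t t0; rewrite scale0r addr0 => h; lra.
Qed.

Lemma seg_gt y1 y2 c (t : R) : c < f y1 -> c < f y2 -> 0 <= t <= 1 ->
  c < f (y1 + t *: (y2 - y1)).
Proof.
move=> h1 h2 /andP[t0 t1].
case: (LM y1 (y2 - y1)) => H.
- have := H 0 t t0; rewrite scale0r addr0 => h; lra.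
- have := H t 1 t1; rewrite scale1r (addrC y1 (y2 - y1)) subrK => h; lra.
Qed.

Lemma convE (w x1 x2 : 'rV[R]_(1+n)) (t : R) :
  w + ((1 - t) *: x1 + t *: x2) = (w + x1) + t *: ((w + x2) - (w + x1)).
Proof.
rewrite opprD addrACA subrr add0r scalerBl scale1r scalerBr.
by rewrite !addrA [in LHS]addrAC.
Qed.

Definition comb (l1 l2 : R) (x1 x2 : 'rV[R]_(1+n)) :=
  if l1 + l2 == 0 then 0 else (l1 / (l1 + l2)) *: x1 + (l2 / (l1 + l2)) *: x2.

Lemma combK l1 l2 x1 x2 : 0 <= l1 -> 0 <= l2 ->
  (l1 + l2) *: comb l1 l2 x1 x2 = l1 *: x1 + l2 *: x2.
Proof.
move=> h1 h2; rewrite /comb; case: eqP => hL.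
  have [e1 e2] : l1 = 0 /\ l2 = 0 by split; lra.
  by rewrite e1 e2 !(addr0, scale0r, scaler0).
have hL' : l1 + l2 != 0 by exact/eqP.
by rewrite scalerDr !scalerA ![(l1 + l2) * _]mulrC !divfK.
Qed.

Lemma comb_in (P : 'rV[R]_(1+n) -> Prop)
  (Pc : forall x1 x2 t, 0 <= t <= 1 -> P x1 -> P x2 -> P ((1 - t) *: x1 + t *: x2))
  l1 l2 x1 x2 : 0 <= l1 -> 0 <= l2 -> 0 < l1 + l2 ->
  (0 < l1 -> P x1) -> (0 < l2 -> P x2) -> P (comb l1 l2 x1 x2).
Proof.
move=> h1 h2 hL P1 P2; rewrite /comb; case: eqP => hL0; first by exfalso; lra.
have hL' : l1 + l2 != 0 by exact/eqP.
have e1 : l1 / (l1 + l2) = 1 - l2 / (l1 + l2).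
  by apply: (mulIf hL'); rewrite mulrBl !divfK // mul1r addrK.
have [z1|p1] := eqVneq l1 0.
  subst l1; rewrite mul0r scale0r !add0r divff ?scale1r; last by rewrite add0r in hL'.
  apply: P2; lra.
have [z2|p2] := eqVneq l2 0.
  subst l2; rewrite mul0r scale0r !addr0 divff ?scale1r; last by rewrite addr0 in hL'.
  apply: P1.
  by rewrite lt_def p1.
rewrite e1; apply: Pc.
- have hLp : 0 < l1 + l2 by [].
  apply/andP; split; [exact: divr_ge0 h2 (ltW hL) | by rewrite ler_pdivrMr // mul1r lerDr].
- by apply: P1; rewrite lt_def p1.
- by apply: P2; rewrite lt_def p2.
Qed.

Lemma hyper w : exists a : 'rV[R]_(1+n), a != 0 /\
  forall z, dt z a = 0 -> f (w + z) = f w.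
Proof.
set c := f w.
pose A x : Prop := f (w + x) < c.
pose B y : Prop := c < f (w + y).
have Ac : forall x1 x2 t, 0 <= t <= 1 -> A x1 -> A x2 -> A ((1 - t) *: x1 + t *: x2).
  by move=> x1 x2 t ht h1 h2; rewrite /A convE; apply: seg_lt.
have Bc : forall x1 x2 t, 0 <= t <= 1 -> B x1 -> B x2 -> B ((1 - t) *: x1 + t *: x2).
  by move=> x1 x2 t ht h1 h2; rewrite /B convE; apply: seg_gt.
pose K z := exists l m x y, [/\ 0 <= l, 0 <= m, 0 < l + m,
  (0 < l -> A x) & ((0 < m -> B y) /\ z = l *: x - m *: y)].
have Kadd : forall z1 z2, K z1 -> K z2 -> K (z1 + z2).
  move=> _ _ [l1 [m1 [x1 [y1 [l10 m10 s1 A1 [B1 ->]]]]]]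
              [l2 [m2 [x2 [y2 [l20 m20 s2 A2 [B2 ->]]]]]].
  exists (l1 + l2), (m1 + m2), (comb l1 l2 x1 x2), (comb m1 m2 y1 y2).
  split; first by lra. by lra. by lra.
  - by move=> hl; apply: (comb_in _ Ac).
  split; first by move=> hm; apply: (comb_in _ Bc).
  - rewrite !combK //.
    by rewrite opprD !addrA [_ - m1 *: y1 + _]addrAC.
have Ksc : forall t z, 0 < t -> K z -> K (t *: z).
  move=> t _ ht [l [m [x [y [l0 m0 s Ax [By ->]]]]]].
  exists (t * l), (t * m), x, y; split.
  - by rewrite mulr_ge0 // ltW.
  - by rewrite mulr_ge0 // ltW.
  - by rewrite -mulrDr mulr_gt0.
  - by move=> h; apply: Ax; rewrite -(pmulr_rgt0 _ ht).
  split; first by move=> h; apply: By; rewrite -(pmulr_rgt0 _ ht).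
  by rewrite scalerBr !scalerA.
have K0 : ~ K 0.
  move=> [l [m [x [y [l0 m0 s Ax [By]]]]]] /eqP; rewrite eq_sym subr_eq0 => /eqP e.
  have [lp|l00] := ltrP 0 l; last first.
    have lz : l = 0 by apply/eqP; rewrite eq_le l00 l0.
    have mp : 0 < m by lra.
    move: e; rewrite lz scale0r => /eqP; rewrite eq_sym scaler_eq0 gt_eqF //= => /eqP y0.
    by have := By mp; rewrite /B y0 addr0 /c ltxx.
  have [mp|m00] := ltrP 0 m; last first.
    have mz : m = 0 by apply/eqP; rewrite eq_le m00 m0.
    move: e; rewrite mz scale0r => /eqP; rewrite scaler_eq0 gt_eqF //= => /eqP x0.
    by have := Ax lp; rewrite /A x0 addr0 /c ltxx.
  have ey : y = (l / m) *: x.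
    by rewrite mulrC -scalerA e scalerA mulVf ?scale1r // gt_eqF.
  have hA := Ax lp; have hB := By mp.
  case: (LM w x) => H.
  + have := H 0 1 ler01; rewrite scale0r addr0 scale1r -/c => h; rewrite /A in hA; lra.
  + have := H 0 (l / m) (ltW (divr_gt0 lp mp)); rewrite scale0r addr0 -ey -/c => h.
    rewrite /B in hB; lra.
have [a [an0 Ha]] := sep _ _ Kadd Ksc K0.
exists a; split => // z hz.
have daa := dt_pos _ _ an0.
have [hlt|hgt|//] := ltgtP (f (w + z)) c.
- have [e [e0 he]] := LO1 (w + z) (- a) _ hlt.
  have : K (z - e *: a).
    exists (1:R), (0:R), (z - e *: a), 0; split.
    + exact: ler01.
    + exact: lexx.
    + by rewrite addr0 ltr01.
    + by move=> _; rewrite /A addrA -scalerN.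
    + by split; [rewrite ltxx | rewrite scale1r scale0r subr0].
  move=> /Ha; rewrite dtD -scaleNr dtZ hz add0r => h; nra.
- have [e [e0 he]] := LO2 (w + z) a _ hgt.
  have : K (- (z + e *: a)).
    exists (0:R), (1:R), 0, (z + e *: a); split.
    + exact: lexx.
    + exact: ler01.
    + by rewrite add0r ltr01.
    + by rewrite ltxx.
    + by split; [move=> _; rewrite /B addrA | rewrite scale1r scale0r sub0r].
  move=> /Ha; rewrite -scaleN1r dtZ dtD dtZ hz add0r => h; nra.
Qed.

End Assembly.
End Sep.

Set Implicit Arguments.
Unset Strict Implicit.

Section An.
Variable R : realType.
Variable W : normedModType R.

Lemma near_ex (a : W) (P : W -> Prop) :
  (\forall y \near a, P y) -> exists2 e : R, 0 < e & forall y, `|a - y| < e -> P y.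
Proof. by move=> /nbhs_normP [e e0 H]; exists e => // y hy; apply: H. Qed.

Lemma near_exR (a : R) (P : R -> Prop) :
  (\forall y \near a, P y) -> exists2 e : R, 0 < e & forall y, `|a - y| < e -> P y.
Proof. by move=> /nbhs_normP [e e0 H]; exists e => // y hy; apply: H. Qed.

Lemma cont_ex (g : W -> R) x : continuous g -> forall eps, 0 < eps ->
  exists2 e : R, 0 < e & forall y, `|x - y| < e -> `|g x - g y| < eps.
Proof.
move=> gc eps he; have /cvgrPdist_lt /(_ eps he) := gc x.
by move/near_ex.
Qed.

Lemma der_ex (g : W -> R) p v : derivable g p v -> forall eps, 0 < eps ->
  exists2 e : R, 0 < e & forall t, t != 0 -> `|t| < e ->
    `|'D_v g p - t^-1 * (g (t *: v + p) - g p)| < eps.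
Proof.
move=> dg eps he; have /cvgrPdist_lt /(_ eps he) := dg.
move=> /near_exR [e e0 H]; exists e => // t t0 ht.
by apply: H; rewrite ?sub0r ?normrN.
Qed.

Lemma open_ex (U : set W) p : open U -> U p ->
  exists2 e : R, 0 < e & forall y, `|p - y| < e -> U y.
Proof. by move=> oU Up; apply: near_ex; apply: open_nbhs_nbhs. Qed.

Lemma rich (g : W -> R) (U : set W) p v : continuous g -> open U -> U p -> g p = 0 ->
  derivable g p v -> 'D_v g p != 0 ->
  forall del, 0 < del -> exists2 r : R, 0 < r & forall z, `|z| < r ->
    exists t, [/\ -del <= t <= del, U (t *: v + (z + p)) & g (t *: v + (z + p)) = 0].
Proof.
move=> gc oU Up gp dg dn del hdel.
set d := 'D_v g p.
have hd : 0 < `|d| by rewrite normr_gt0.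
have [rho rho0 hU] := open_ex oU Up.
have [eta eta0 hq] := der_ex dg hd.
set t0 := Num.min del (Num.min (eta / 2) (rho / (2 * (`|v| + 1)))).
have hv1 : 0 < `|v| + 1 by rewrite ltr_wpDl.
have t0p : 0 < t0 by rewrite /t0 !lt_min hdel divr_gt0 //= divr_gt0 // mulr_gt0.
have t0del : t0 <= del by rewrite /t0 ge_min lexx.
have t0eta : t0 < eta.
  rewrite /t0 !gt_min; apply/orP; right; apply/orP; left.
  by rewrite ltr_pdivrMr // ltr_pMr // ltr1n.
have t0rho : t0 * (`|v| + 1) <= rho / 2.
  rewrite -ler_pdivlMr // /t0 !ge_min; apply/orP; right; apply/orP; right.
  by rewrite invfM mulrA lexx.
have sg : forall t, t != 0 -> `|t| < eta -> 0 < (t * d) * g (t *: v + p).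
  move=> t tn0 ht; have := hq t tn0 ht; rewrite gp subr0.
  set q := t^-1 * _ => h.
  have hdq : 0 < d * q.
    move: h hd; rewrite ltr_norml; case: (ltrgt0P d) => [dp|dn'|d0].
    - by move=> /andP[h1 h2] _; rewrite -/d in h1 h2; nra.
    - by move=> /andP[h1 h2] _; rewrite -/d in h1 h2; nra.
    - by rewrite ltxx.
  have -> : g (t *: v + p) = t * q by rewrite /q mulrA divff // mul1r.
  have : 0 < t * t by rewrite lt_def mulf_neq0 //= -expr2 sqr_ge0.
  nra.
have t0n0 : t0 != 0 by rewrite gt_eqF.
have t0abs : `|t0| < eta by rewrite gtr0_norm.
have sgp := sg t0 t0n0 t0abs.
have sgm : 0 < (- t0 * d) * g ((- t0) *: v + p) by apply: sg; rewrite ?oppr_eq0 ?normrN.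
set gP := g (t0 *: v + p) in sgp; set gM := g ((- t0) *: v + p) in sgm.
have gPn : 0 < `|gP| by rewrite normr_gt0; apply: contraTneq sgp => ->; rewrite mulr0 ltxx.
have gMn : 0 < `|gM| by rewrite normr_gt0; apply: contraTneq sgm => ->; rewrite mulr0 ltxx.
have [ep ep0 hp] := cont_ex (t0 *: v + p) gc gPn.
have [em em0 hm] := cont_ex ((- t0) *: v + p) gc gMn.
have sgn : forall a b : R, `|a - b| < `|a| -> 0 < a * b.
  move=> a b; rewrite ltr_norml; case: (ltrgt0P a) => [ap|an|a0].
  - by move=> /andP[h1 h2]; nra.
  - by move=> /andP[h1 h2]; nra.
  - by move=> /andP[h1 h2]; lra.
have rho2 : 0 < rho / 2 by rewrite divr_gt0.
exists (Num.min ep (Num.min em (rho / 2))); first by rewrite !lt_min ep0 em0 rho2.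
move=> z; rewrite !lt_min => /and3P[zp zm zr].
pose phi s := g (s *: v + (z + p)).
have phic : continuous phi.
  move=> x; apply: continuous_comp; last exact: gc.
  by apply: continuousD; [exact: scalel_continuous | exact: cst_continuous].
have hP : 0 < gP * phi t0.
  apply: sgn; apply: hp.
  have -> : t0 *: v + (z + p) = (t0 *: v + p) + z by rewrite addrCA addrC.
  by rewrite opprD addrA subrr add0r normrN.
have hM : 0 < gM * phi (- t0).
  apply: sgn; apply: hm.
  have -> : (- t0) *: v + (z + p) = ((- t0) *: v + p) + z by rewrite addrCA addrC.
  by rewrite opprD addrA subrr add0r normrN.
have tr3 : forall x y w : R, 0 < x * y -> 0 < y * w -> 0 < x * w.
  move=> x y w; case: (ltrgt0P y) => [yp|yn|->]; last by rewrite mulr0 ltxx.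
  - move=> h1 h2; have : 0 < (x * y) * (y * w) by rewrite mulr_gt0.
    nra.
  - move=> h1 h2; have : 0 < (x * y) * (y * w) by rewrite mulr_gt0.
    nra.
have hA := tr3 _ _ _ sgp hP.
have hB := tr3 _ _ _ sgm hM.
have hprod : phi (- t0) * phi t0 < 0.
  have hd0 : t0 * d != 0 by rewrite mulf_neq0 // gt_eqF.
  have hd2 : 0 < (t0 * d) * (t0 * d) by rewrite -expr2 exprn_even_gt0.
  have := mulr_gt0 hA hB; nra.
have [c cI phic0] : exists2 c, c \in `[- t0, t0] & phi c = 0.
  apply: IVT.
  - by lra.
  - exact: continuous_subspaceT.
  - rewrite ge_min le_max; apply/andP; split; apply/orP; nra.
move: cI; rewrite in_itv /= => /andP[c1 c2].
exists c; split => //.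
- by apply/andP; split; lra.
- apply: hU.
  have -> : c *: v + (z + p) = p + (c *: v + z) by rewrite addrA addrC.
  rewrite opprD addrA subrr add0r normrN.
  apply: (le_lt_trans (ler_normD _ _)).
  rewrite normrZ.
  have : `|c| <= t0 by rewrite ler_norml c1 c2.
  have : 0 <= `|v| by [].
  nra.
Qed.

Lemma line_derive (g : W -> R) (v q : W) (x : R) :
  derivable g (x *: v + q) v ->
  is_derive x 1 (fun s : R => g (s *: v + q)) ('D_v g (x *: v + q)).
Proof.
move=> dg.
have E : (fun h : R => h^-1 *: (((fun s : R => g (s *: v + q)) \o shift x) (h *: 1)
             - g (x *: v + q)))
       = (fun h : R => h^-1 *: ((g \o shift (x *: v + q)) (h *: v) - g (x *: v + q))).
  apply: funext => h /=.
  by rewrite /shift /= [h *: 1]mulr1 scalerDl addrA.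
apply: DeriveDef.
- by rewrite /derivable E.
- by rewrite /derive E.
Qed.

Lemma mvt2 (psi df : R -> R) (t : R) : (forall x : R, is_derive x (1 : R) psi (df x)) ->
  continuous psi -> exists c, `|c| <= `|t| /\ psi t - psi 0 = df c * t.
Proof.
move=> hd hc.
have [tn|tp] := leP t 0.
- have [c cI e] := MVT_segment tn (fun x _ => hd x) (continuous_subspaceT hc).
  exists c; move: cI; rewrite in_itv /= => /andP[c1 c2]; split.
    rewrite (ler0_norm tn) ler_norml opprK c1 /=.
    by apply: (le_trans c2); rewrite oppr_ge0.
  by rewrite -opprB e sub0r mulrN opprK.
- have [c cI e] := MVT_segment (ltW tp) (fun x _ => hd x) (continuous_subspaceT hc).
  exists c; move: cI; rewrite in_itv /= => /andP[c1 c2]; split.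
    rewrite (gtr0_norm tp) ler_norml c2 andbT.
    by apply: le_trans c1; rewrite oppr_le0 ltW.
  by rewrite e subr0.
Qed.

End An.

Section An.
Variable R : realType.
Variable W : normedModType R.
Lemma addD (g : W -> R) (hd : forall x v, derivable g x v)
  (hc : forall v, continuous (fun x => 'D_v g x)) (gc : continuous g) p v1 v2 :
  'D_(v1 + v2) g p = 'D_v1 g p + 'D_v2 g p.
Proof.
set D1 := 'D_v1 g p; set D2 := 'D_v2 g p.
rewrite [in LHS]/derive; apply: cvg_lim => //.
apply/cvgrPdist_lt => eps eps0.
have e2p : 0 < eps / 2 by rewrite divr_gt0.
have [e1 e10 h1] := der_ex (hd p v1) e2p.
have [e2 e20 h2] := cont_ex p (hc v2) e2p.
have nv : 0 < `|v1| + `|v2| + 1 by rewrite ltr_wpDl // addr_ge0.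
set e := Num.min e1 (e2 / (`|v1| + `|v2| + 1)).
have e0 : 0 < e by rewrite lt_min e10 divr_gt0.
apply/nbhs_normP; exists e => //= t ht tn0.
have {}ht : `|t| < e by move: ht; rewrite /ball_ /= sub0r normrN.
have [te1 te2] : `|t| < e1 /\ `|t| < e2 / (`|v1| + `|v2| + 1).
  by move: ht; rewrite lt_min => /andP[].
pose psi s := g (s *: v2 + (t *: v1 + p)).
have psic : continuous psi.
  move=> x; apply: continuous_comp; last exact: gc.
  by apply: continuousD; [exact: scalel_continuous | exact: cst_continuous].
have [c [hct ec]] := mvt2 t (fun x => line_derive (hd (x *: v2 + (t *: v1 + p)) v2)) psic.
have e3 : t *: v2 + (t *: v1 + p) = t *: (v1 + v2) + p by rewrite addrA scalerDr [t *: v2 + _]addrC.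
move: ec; rewrite /= e3 scale0r add0r => ec.
have -> : t^-1 *: (g (t *: (v1 + v2) + p) - g p)
   = 'D_v2 g (c *: v2 + (t *: v1 + p)) + t^-1 * (g (t *: v1 + p) - g p).
  rewrite -[g (t *: (v1 + v2) + p)](subrK (g (t *: v1 + p))) ec.
  have sc : forall a b : R, a *: b = a * b by [].
  by rewrite -addrA sc mulrDr [t^-1 * (_ * t)]mulrC -mulrA mulfV // mulr1.
have hA := h1 t tn0 te1.
have hB : `|D2 - 'D_v2 g (c *: v2 + (t *: v1 + p))| < eps / 2.
  apply: h2.
  have -> : c *: v2 + (t *: v1 + p) = p + (c *: v2 + t *: v1) by rewrite addrA addrC.
  rewrite opprD addrA subrr add0r normrN.
  apply: (le_lt_trans (ler_normD _ _)); rewrite !normrZ.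
  have hN := te2; rewrite ltr_pdivlMr // in hN.
  have := normr_ge0 v1; have := normr_ge0 v2; have := normr_ge0 t.
  nra.
set q1 := t^-1 * _ in hA *.
set Dc := 'D_v2 g _ in hB *.
rewrite -/D1 -/D2.
have -> : D1 + D2 - (Dc + q1) = (D1 - q1) + (D2 - Dc) by ring.
apply: (le_lt_trans (ler_normD _ _)).
lra.
Qed.
End An.

Section Comb.
Variable R : realType.

Lemma mono_opp (k : R -> R) t1 s : monotonic k -> k t1 < k 0 -> t1 * s < 0 -> k 0 <= k s.
Proof.
move=> [inc|dec] h hs.
- have t1n : t1 < 0.
    rewrite ltNge; apply/negP => t0; have := inc _ _ t0; lra.
  have sp : 0 < s by nra.
  exact: inc (ltW sp).
- have t1p : 0 < t1.
    rewrite ltNge; apply/negP => t0; have := dec _ _ t0; lra.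
  have sn : s < 0 by nra.
  exact: dec (ltW sn).
Qed.

Lemma mono_opp2 (k : R -> R) t1 s : monotonic k -> k 0 < k t1 -> t1 * s < 0 -> k s <= k 0.
Proof.
move=> [inc|dec] h hs.
- have t1p : 0 < t1.
    rewrite ltNge; apply/negP => t0; have := inc _ _ t0; lra.
  have sn : s < 0 by nra.
  exact: inc (ltW sn).
- have t1n : t1 < 0.
    rewrite ltNge; apply/negP => t0; have := dec _ _ t0; lra.
  have sp : 0 < s by nra.
  exact: dec (ltW sp).
Qed.

Variable n : nat.
Variable f : 'rV[R]_n -> R.
Hypothesis LM : forall x d, monotonic (fun t => f (x + t *: d)).

Lemma seg_const A B c (l : R) : f A = c -> f B = c -> 0 <= l <= 1 ->
  f (B + l *: (A - B)) = c.
Proof.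
move=> hA hB /andP[l0 l1].
have eA : B + 1 *: (A - B) = A by rewrite scale1r addrC subrK.
have eB : B + 0 *: (A - B) = B by rewrite scale0r addr0.
case: (LM B (A - B)) => H.
- have := H _ _ l0; have := H _ _ l1; rewrite eA eB; lra.
- have := H _ _ l0; have := H _ _ l1; rewrite eA eB; lra.
Qed.

Ltac vec := apply/matrixP => i j; rewrite !mxE; ring.

Lemma KJc x0 e u a b c eps t1 t2 : a < b -> a <= f x0 <= b ->
  (forall t, t < 0 -> f (x0 + t *: e) <= a) ->
  (forall t, 0 < t -> b <= f (x0 + t *: e)) -> 0 < eps ->
  (f x0 < c < b \/ a < c < f x0) ->
  f (x0 + eps *: e + t1 *: u) = c -> f (x0 + (- eps) *: e + t2 *: u) = c -> False.
Proof.
move=> ab /andP[ay yb] hl hr ep hc h1 h2.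
have [ca cb] : a < c /\ c < b by case: hc => /andP[]; split; lra.
have cy : c != f x0 by case: hc => /andP[] h h'; apply/eqP; lra.
have eline : forall s, f (x0 + s *: e) != c.
  move=> s; have [sn|sp|->] := ltgtP s 0.
  - by have := hl _ sn; apply: contraTneq => ->; rewrite -ltNge.
  - by have := hr _ sp; apply: contraTneq => ->; rewrite -ltNge.
  - by rewrite scale0r addr0 eq_sym.
have t1n : t1 != 0.
  apply/eqP => t10; move: h1; rewrite t10 scale0r addr0 => /eqP; exact/negP/eline.
have t2n : t2 != 0.
  apply/eqP => t20; move: h2; rewrite t20 scale0r addr0 => /eqP; exact/negP/eline.
have same : 0 < t1 * t2.
  rewrite ltNge; apply/negP => hle.
  have hlt : t1 * t2 < 0 by rewrite lt_neqAle hle andbT mulf_neq0.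
  have d0 : t2 - t1 != 0.
    apply/eqP => h; have e21 : t2 = t1 by lra.
    by move: hlt; rewrite e21; nra.
  set l := t2 / (t2 - t1).
  have hl' : l * (t2 - t1) = t2 by rewrite /l divfK.
  have hz : t2 + l * (t1 - t2) = 0.
    by rewrite -opprB mulrN hl' subrr.
  have hh := congr1 (fun x => x * (t2 - t1)) hl'; simpl in hh.
  have l0 : 0 <= l by nra.
  have l1 : l <= 1 by nra.
  have := seg_const h1 h2 (l := l); rewrite l0 l1 => /(_ isT).
  have -> : x0 + - eps *: e + t2 *: u + l *: (x0 + eps *: e + t1 *: u - (x0 + - eps *: e + t2 *: u))
      = x0 + (- eps + l * (2 * eps)) *: e + (t2 + l * (t1 - t2)) *: u by vec.
  rewrite hz scale0r addr0 => /eqP; exact/negP/eline.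
case: hc => /andP[hc1 hc2].
- have k0 : b <= f (x0 + eps *: e + 0 *: u) by rewrite scale0r addr0; exact: hr.
  have k1 : f (x0 + eps *: e + t1 *: u) < f (x0 + eps *: e + 0 *: u) by rewrite h1; lra.
  have hs : t1 * - t2 < 0 by rewrite mulrN oppr_lt0.
  have kk := mono_opp (LM (x0 + eps *: e) u) k1 hs.
  have em1 : x0 + (-1) *: ((- eps) *: e + t2 *: u) = x0 + eps *: e + (- t2) *: u by vec.
  have ep1 : x0 + 1 *: ((- eps) *: e + t2 *: u) = x0 + (- eps) *: e + t2 *: u by vec.
  have e0 : x0 + 0 *: ((- eps) *: e + t2 *: u) = x0 by vec.
  case: (LM x0 ((- eps) *: e + t2 *: u)) => H.
  + have := H (-1) 0; rewrite em1 e0 => /(_ (lerN10 _)); lra.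
  + have := H 0 1 ler01; rewrite ep1 e0; lra.
- have k0 : f (x0 + (- eps) *: e + 0 *: u) <= a.
    by rewrite scale0r addr0; apply: hl; rewrite oppr_lt0.
  have k1 : f (x0 + (- eps) *: e + 0 *: u) < f (x0 + (- eps) *: e + t2 *: u) by rewrite h2; lra.
  have hs : t2 * - t1 < 0 by rewrite mulrN oppr_lt0 mulrC.
  have kk := mono_opp2 (LM (x0 + (- eps) *: e) u) k1 hs.
  have em1 : x0 + (-1) *: (eps *: e + t1 *: u) = x0 + (- eps) *: e + (- t1) *: u by vec.
  have ep1 : x0 + 1 *: (eps *: e + t1 *: u) = x0 + eps *: e + t1 *: u by vec.
  have e0 : x0 + 0 *: (eps *: e + t1 *: u) = x0 by vec.
  case: (LM x0 (eps *: e + t1 *: u)) => H.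
  + have := H 0 1 ler01; rewrite ep1 e0; lra.
  + have := H (-1) 0; rewrite em1 e0 => /(_ (lerN10 _)); lra.
Qed.
End Comb.

Section Main.
Variable R : realType.
Variable n : nat.
Variable M : set ('rV[R]_n * R).
Variable f : 'rV[R]_n -> R.
Hypothesis hM : IRHS M.
Hypothesis hf : forall (x : 'rV[R]_n) (y : R), M (x, y) <-> y = f x.

Lemma LMf : forall x d, monotonic (fun t => f (x + t *: d)).
Proof.
move=> x d; case: hM => _ _ /(_ d x) [gl [mg hg]].
have -> : (fun t => f (x + t *: d)) = gl.
  by apply: funext => t; apply/(hg t); exact/hf.
exact: mg.
Qed.

Lemma pair_norm (z : 'rV[R]_n * R) r : `|z.1| < r -> `|z.2| < r -> `|z| < r.
Proof. by move=> h1 h2; rewrite prod_normE gt_max h1 h2. Qed.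

Lemma splitv (v : 'rV[R]_n * R) : v = (v.1, 0) + (0, v.2).
Proof. by case: v => a b; rewrite /= ; congr pair; rewrite /= ?addr0 ?add0r. Qed.

Lemma onM (t : R) (u ex : 'rV[R]_n) (s z : R) x0 :
  M (t *: (u, s) + ((ex, z) + (x0, f x0))) -> f (x0 + ex + t *: u) = f x0 + z + t * s.
Proof.
have -> : t *: (u, s) + ((ex, z) + (x0, f x0)) = (x0 + ex + t *: u, f x0 + z + t * s).
  rewrite /=; congr pair; rewrite /=.
    by rewrite addrC [ex + x0]addrC.
  by change (t * s + (z + f x0) = f x0 + z + t * s); ring.
by move/hf => ->.
Qed.

Lemma ar0 (sg q E r : R) : 0 < q -> 0 <= E -> `|sg| <= 1 -> q * (2 * (E + 1)) = r ->
  `|sg| * q * E < r.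
Proof.
move=> qp E0 hsg qe.
have h1 : `|sg| * (q * E) <= 1 * (q * E) by rewrite ler_wpM2r // mulr_ge0 // ltW.
have h2 : q * (2 * (E + 1)) = 2 * (q * E) + 2 * q by ring.
have h4 : 0 <= q * E by rewrite mulr_ge0 // ltW.
rewrite -mulrA; lra.
Qed.

Lemma ar1 (y a b p1 p2 X del : R) : 0 < del -> 0 <= X -> p1 <= X -> - p2 <= X ->
  4 * X + 4 * del = b - a -> y + p2 <= a -> b <= y + p1 -> False.
Proof. move=> *; lra. Qed.

Lemma ar2 (y b r m : R) : 0 < m -> m <= r / 2 -> m <= (b - y) / 2 -> 0 < r ->
  (y < y + m < b) /\ m < r.
Proof. move=> *; split; [apply/andP; split|]; lra. Qed.

Lemma ar3 (y a r m : R) : 0 < m -> m <= r / 2 -> m <= (y - a) / 2 -> 0 < r ->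
  (a < y - m < y) /\ m < r.
Proof. move=> *; split; [apply/andP; split|]; lra. Qed.

Lemma KJf x0 e a b : a < b -> a <= f x0 <= b ->
  (forall t, t < 0 -> f (x0 + t *: e) <= a) ->
  (forall t, 0 < t -> b <= f (x0 + t *: e)) -> False.
Proof.
move=> ab hy hl hr.
have [_ hsm _] := hM.
have Mp : M (x0, f x0) by apply/hf.
have [U [g [oU Up smg hUM [v hv]]]] := hsm _ Mp.
have gc : continuous g := smg 0%N.
have [hd hc] := smg 1%N.
have gp : g (x0, f x0) = 0 by apply/(hUM _ Up).
have hsum := addD hd hc gc (x0, f x0) (v.1, 0) (0, v.2).
rewrite -splitv in hsum.
have ne : 0 < `|e| + 1 by rewrite ltr_wpDl.
have getp : forall (w : 'rV[R]_n * R) del r, 0 < del ->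
   (forall z, `|z| < r -> exists t, [/\ - del <= t <= del,
        U (t *: w + (z + (x0, f x0))) & g (t *: w + (z + (x0, f x0))) = 0]) ->
   forall (sg : R) (zt : R), `|sg| <= 1 -> `|zt| < r -> 0 < r ->
   exists t, - del <= t <= del /\
     f (x0 + (sg * (r / (2 * (`|e| + 1)))) *: e + t *: w.1) = f x0 + zt + t * w.2.
  move=> w del r del0 hrich sg zt hsg hzt r0.
  have [|t [tI Ut gt]] := hrich ((sg * (r / (2 * (`|e| + 1)))) *: e, zt).
    apply: pair_norm => //=.
    have qp : 0 < r / (2 * (`|e| + 1)) by rewrite divr_gt0 // mulr_gt0.
    have qe : r / (2 * (`|e| + 1)) * (2 * (`|e| + 1)) = r by rewrite divfK // gt_eqF // mulr_gt0.
    rewrite normrZ normrM (gtr0_norm qp).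
    exact: ar0 qp (normr_ge0 e) hsg qe.
  exists t; split => //.
  apply: onM; move: Ut gt; case: (w) => w1 w2 Ut gt /=.
  exact/(hUM _ Ut).
have [hv2|hv2] := eqVneq ('D_(0, v.2) g (x0, f x0)) 0; last first.
  set s := v.2 in hv2.
  have bap : 0 < b - a by rewrite subr_gt0.
  have sp : 0 < 4 * (`|s| + 1) by rewrite mulr_gt0 // ltr_wpDl.
  set del := (b - a) / (4 * (`|s| + 1)).
  have del0 : 0 < del by rewrite divr_gt0.
  have dele : del * (4 * (`|s| + 1)) = b - a by rewrite divfK // gt_eqF.
  have [r r0 hrich] := rich gc oU Up gp (hd _ (0, s)) hv2 del0.
  have n1 : `|1 : R| <= 1 by rewrite normr1.
  have n2 : `|-1 : R| <= 1 by rewrite normrN normr1.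
  have n0 : `|0 : R| < r by rewrite normr0.
  have [t1 [t1I e1]] := getp (0, s) del r del0 hrich 1 0 n1 n0 r0.
  have [t2 [t2I e2]] := getp (0, s) del r del0 hrich (-1) 0 n2 n0 r0.
  move: e1 e2; rewrite /= !scaler0 !addr0 mul1r mulN1r => e1 e2.
  have qp : 0 < r / (2 * (`|e| + 1)) by rewrite divr_gt0 // mulr_gt0.
  have := hr _ qp; have := hl (- (r / (2 * (`|e| + 1)))); rewrite oppr_lt0 => /(_ qp).
  rewrite e1 e2.
  have h1 : t1 * s <= del * `|s|.
    apply: (le_trans (ler_norm _)); rewrite normrM ler_wpM2r //.
    by rewrite ler_norml.
  have h2 : - (t2 * s) <= del * `|s|.
    apply: (le_trans (ler_norm _)); rewrite normrN normrM ler_wpM2r //.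
    by rewrite ler_norml.
  have dd : 4 * (del * `|s|) + 4 * del = b - a by rewrite -dele; ring.
  have X0 : 0 <= del * `|s| by rewrite mulr_ge0 // ltW.
  exact: ar1 del0 X0 h1 h2 dd.
set u := v.1.
have hv1 : 'D_(u, 0) g (x0, f x0) != 0.
  by move: hv; rewrite hsum hv2 addr0.
have [r r0 hrich] := rich gc oU Up gp (hd _ (u, 0)) hv1 ltr01.
have [c [hcc hcr]] : exists c, (f x0 < c < b \/ a < c < f x0) /\ `|c - f x0| < r.
  have r2 : 0 < r / 2 by rewrite divr_gt0.
  case: (ltP (f x0) b) => hyb.
  - exists (f x0 + Num.min (r / 2) ((b - f x0) / 2)).
    have m0 : 0 < Num.min (r / 2) ((b - f x0) / 2) by rewrite lt_min r2 divr_gt0 // subr_gt0.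
    have m1 : Num.min (r / 2) ((b - f x0) / 2) <= r / 2 by rewrite ge_min lexx.
    have m2 : Num.min (r / 2) ((b - f x0) / 2) <= (b - f x0) / 2 by rewrite ge_min lexx orbT.
    rewrite addrAC subrr add0r gtr0_norm //.
    by have [H1 H2] := ar2 m0 m1 m2 r0; split; [left|].
  - exists (f x0 - Num.min (r / 2) ((f x0 - a) / 2)).
    have ay : a < f x0 by apply: lt_le_trans hyb.
    have m0 : 0 < Num.min (r / 2) ((f x0 - a) / 2) by rewrite lt_min r2 divr_gt0 // subr_gt0.
    have m1 : Num.min (r / 2) ((f x0 - a) / 2) <= r / 2 by rewrite ge_min lexx.
    have m2 : Num.min (r / 2) ((f x0 - a) / 2) <= (f x0 - a) / 2 by rewrite ge_min lexx orbT.
    rewrite addrAC subrr add0r normrN gtr0_norm //.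
    by have [H1 H2] := ar3 m0 m1 m2 r0; split; [right|].
have n1 : `|1 : R| <= 1 by rewrite normr1.
have n2 : `|-1 : R| <= 1 by rewrite normrN normr1.
have [t1 [_ e1]] := getp (u, 0) 1 r ltr01 hrich 1 (c - f x0) n1 hcr r0.
have [t2 [_ e2]] := getp (u, 0) 1 r ltr01 hrich (-1) (c - f x0) n2 hcr r0.
move: e1 e2; rewrite /= !mulr0 !addr0 mul1r mulN1r [f x0 + (c - f x0)]addrC subrK => e1 e2.
have qp : 0 < r / (2 * (`|e| + 1)) by rewrite divr_gt0 // mulr_gt0.
exact: (KJc LMf ab hy hl hr qp hcc e1 e2).
Qed.
End Main.

Unset Implicit Arguments.

Theorem lemma4 (R : realType) (D : nat) (M : set ('rV[R]_D * R))
    (f : 'rV[R]_D -> R) :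
  (0 < D)%N ->
  IRHS M ->
  (forall (x : 'rV[R]_D) (y : R), M (x, y) <-> y = f x) ->
  forall w : 'rV[R]_D,
    exists a : 'rV[R]_D,
      a != 0 /\
      forall x y : 'rV[R]_D,
        (x - w) *m a^T = 0 -> (y - w) *m a^T = 0 -> f x = f y.
Proof.
case: D M f => [//|m] M f _ hM hf w.
have LM := LMf hM hf.
have KJ := KJf hM hf.
have [a [an0 ha]] := hyper _ _ _ LM KJ w.
exists a; split => // x y hx hy.
have ex : f x = f w.
  have := ha (x - w); rewrite /dt hx mxE => /(_ erefl).
  by rewrite addrC subrK.
have ey : f y = f w.
  have := ha (y - w); rewrite /dt hy mxE => /(_ erefl).
  by rewrite addrC subrK.
by rewrite ex ey.
Qed.
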